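(* PARITY cannot be represented by normal programs: for every $n\ge 3$ there is no normal program $\Pi_n$ with $var(\Pi_n)=\{x_1,\dots,x_n\}$ and $Ans(\Pi_n)=$ PARITY$_n$. In particular there is no sequence of normal programs $\{\Pi_n\}_{n\ge1}$ with $Ans(\Pi_n)=$ PARITY$_n$ for all $n$.
   Context: A rule element is one of $\top$, $\bot$, $x$, $not\ x$, $not\ not\ x$, where $x$ is a variable. A (canonical) rule is $H\leftarrow B$ with $H$ a variable or $\bot$ and $B$ a finite set of rule elements; a canonical program is a finite set of rules; it is normal if it contains no occurrence of $not\ not$. For a set of variables $I$: $I\models\top$; $I\not\models\bot$; $I\models x$ iff $I\models not\ not\ x$ iff $x\in I$; $I\models not\ x$ iff $x\notin I$; $I\models B$ iff $I$ satisfies every element of $B$; $I$ is closed under $H\leftarrow B$ if $I\models B$ implies $I\models H$. The reduct $\Pi^I$ replaces $not\ not\ x$ by $\top$ if $x\in I$ else $\bot$, and $not\ x$ by $\top$ if $x\notin I$ else $\bot$; $I$ is an answer set of $\Pi$ if $I$ is the least set closed under all rules of $\Pi^I$; $Ans(\Pi)$ is the set of answer sets; $var(\Pi)$ is the set of variables occurring in $\Pi$. Strings $w\in\{0,1\}^n$ are identified with $\{x_i:w_i=1\}$. PARITY$_n$ is the set of strings in $\{0,1\}^n$ with an odd number of 1's. *)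

(* Defs.v *)
From Stdlib Require List.
From mathcomp Require Import all_boot.
Set Implicit Arguments. Unset Strict Implicit. Unset Printing Implicit Defensive.

(* Variables are natural numbers; the variable x_i is the number i. *)
Definition var := nat.

Inductive elem : Type :=
| ETop : elem
| EBot : elem
| EPos : var -> elem
| ENeg : var -> elem
| ENegNeg : var -> elem.

(* A rule H <- B : head is [Some x] for a variable x or [None] for bot;
   the body B is given by a finite list of rule elements (read as a set). *)
Record rule : Type := Rule { head : option var; body : seq elem }.

Definition program := seq rule.

Definition interp := var -> bool.

Definition sat_elem (I : interp) (e : elem) : bool :=
  match e with
  | ETop => true
  | EBot => false
  | EPos x => I x
  | ENeg x => ~~ I x
  | ENegNeg x => I x
  end.

Definition sat_body (I : interp) (B : seq elem) : bool := all (sat_elem I) B.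

Definition sat_head (I : interp) (h : option var) : bool :=
  match h with Some x => I x | None => false end.

Definition closed_rule (I : interp) (r : rule) : Prop :=
  sat_body I (body r) -> sat_head I (head r).

Definition closed_prog (I : interp) (P : program) : Prop :=
  forall r, List.In r P -> closed_rule I r.

Definition reduct_elem (I : interp) (e : elem) : elem :=
  match e with
  | ENegNeg x => if I x then ETop else EBot
  | ENeg x => if I x then EBot else ETop
  | e => e
  end.

Definition reduct_rule (I : interp) (r : rule) : rule :=
  Rule (head r) (map (reduct_elem I) (body r)).

Definition reduct (P : program) (I : interp) : program :=
  map (reduct_rule I) P.

Definition answer_set (P : program) (I : interp) : Prop :=
  closed_prog I (reduct P I) /\
  forall J : interp, closed_prog J (reduct P I) -> forall x, I x -> J x.

Definition normal_elem (e : elem) : bool :=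
  match e with ENegNeg _ => false | _ => true end.

Definition normal (P : program) : Prop :=
  forall r, List.In r P -> all normal_elem (body r).

Definition elem_vars (e : elem) : seq var :=
  match e with
  | ETop | EBot => [::]
  | EPos x | ENeg x | ENegNeg x => [:: x]
  end.

Definition rule_vars (r : rule) : seq var :=
  match head r with Some x => [:: x] | None => [::] end
  ++ flatten (map elem_vars (body r)).

Definition occurs (P : program) (x : var) : Prop :=
  exists r, List.In r P /\ x \in rule_vars r.

Definition vars_are (P : program) (n : nat) : Prop :=
  forall x, occurs P x <-> (1 <= x <= n).

(* The set {x_i : w_i = 1} for a string w in {0,1}^n (w_i is [nth false w (i-1)]). *)
Definition string_set (n : nat) (w : n.-tuple bool) : interp :=
  fun x => (0 < x <= n) && nth false w x.-1.

Definition parity (n : nat) (w : n.-tuple bool) : bool := odd (count id w).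

Definition represents_parity (P : program) (n : nat) : Prop :=
  forall I : interp,
    answer_set P I <->
    exists w : n.-tuple bool, parity w /\ forall x, I x = string_set w x.

(* Main.v *)
Require Import Defs.
From mathcomp Require Import all_boot.
From Stdlib Require List.

Lemma antichain P I J : normal P -> answer_set P I -> answer_set P J ->
  (forall x, I x -> J x) -> forall x, J x -> I x.
Proof.
move=> Hn [HI1 _] [_ HJmin] HIJ; apply: HJmin => r Hr.
case/List.in_map_iff: Hr => r0 [<- Hr0].
rewrite /closed_rule /= => Hb.
have := HI1 (reduct_rule I r0) (List.in_map _ _ _ Hr0); apply.
move: Hb; rewrite /sat_body /= !all_map => Hb.
move: (Hn _ Hr0) Hb; elim: (body r0) => //= e s IH /andP[ne ns] /andP[he hs].
rewrite IH // andbT.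
case: e ne he => //= x _.
case HJx: (J x) => //= _; case HIx: (I x) => //.
by rewrite (HIJ _ HIx) in HJx.
Qed.

Lemma nothree n : 3 <= n ->
  ~ exists P : program, normal P /\ vars_are P n /\ represents_parity P n.
Proof.
move=> Hn [P [HN [_ HR]]].
have s1 : size (true :: nseq n.-1 false) == n.
  by rewrite /= size_nseq prednK //; apply: leq_trans Hn.
have s3 : size (true :: true :: true :: nseq (n - 3) false) == n.
  by rewrite /= size_nseq -addn3 subnK.
pose w1 := Tuple s1. pose w3 := Tuple s3.
have A1 : answer_set P (string_set w1).
  apply/HR; exists w1; split=> //.
  by rewrite /parity /= count_nseq mul0n.
have A3 : answer_set P (string_set w3).
  apply/HR; exists w3; split=> //.
  by rewrite /parity /= count_nseq mul0n.
have := @antichain _ _ _ HN A1 A3 _ 2.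
rewrite /string_set /=.
have -> : (2 <= n) by apply: leq_trans Hn.
clear A1 A3 HR.
have -> : nth false (nseq n.-1 false) 0 = false by rewrite nth_nseq; case: ifP.
move=> H; suff : false by [].
apply: H => // x /andP [Hx1 Hx2].
apply/andP; split=> //.
case: x Hx1 Hx2 => [|[|x]] //= _.
by rewrite nth_nseq; case: ifP.
Qed.

Theorem mainTheorem5 :
  (forall n : nat, 3 <= n ->
     ~ exists P : program, normal P /\ vars_are P n /\ represents_parity P n)
  /\
  ~ exists Pi : nat -> program,
      forall n : nat, 1 <= n ->
        normal (Pi n) /\ vars_are (Pi n) n /\ represents_parity (Pi n) n.
Proof.
split; first exact: nothree.
case=> Pi H; apply: (@nothree 3) => //; exists (Pi 3); exact: H.
Qed.
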